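(* Let $K$ be a field of characteristic $\neq 2$ containing a square root $i$ of $-1$, and let $A\in K\setminus\{0\}$ be a non-zero constant. Then $$\#\{S(P): P \text{ a Markoff triple for } A,\ h(P)\le H\}\sim \tfrac14 H^2\qquad (H\to\infty).$$
   Context: For $A\in K[t]$ non-zero, consider solutions $(x,y,z)\in K[t]^3$ of $x^2+y^2+z^2=Axyz$. The degree of the zero polynomial is $-\infty$. The height of a solution $P=(x,y,z)$ is $h(P)=\max\{\deg x,\deg y,\deg z\}$, and its signature is $S(P)=(\deg x,\deg y,\deg z)$. A Markoff triple is a solution $P=(x,y,z)$ with $h(P)>0$ and $\deg x\le\deg y\le\deg z$. The count is of distinct signatures. *)

(* Defs.v *)
From HB Require Import structures.
From mathcomp Require Import all_boot all_order all_algebra.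
Set Implicit Arguments. Unset Strict Implicit. Unset Printing Implicit Defensive.
Import Order.TTheory GRing.Theory Num.Theory.
Local Open Scope ring_scope.

(* Degrees in N ∪ {-oo}: None = -oo, Some d = d. *)
Definition pdeg (K : fieldType) (p : {poly K}) : option nat :=
  if p == 0 then None else Some (size p).-1.

Definition ole (a b : option nat) : bool :=
  match a, b with
  | None, _ => true
  | Some _, None => false
  | Some m, Some n => (m <= n)%N
  end.

Definition omax (a b : option nat) : option nat := if ole a b then b else a.

Definition ptriple (K : fieldType) := ({poly K} * {poly K} * {poly K})%type.

Definition is_solution (K : fieldType) (A : {poly K}) (P : ptriple K) : Prop :=
  let: (x, y, z) := P in x ^+ 2 + y ^+ 2 + z ^+ 2 = A * x * y * z.

Definition height (K : fieldType) (P : ptriple K) : option nat :=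
  let: (x, y, z) := P in omax (pdeg x) (omax (pdeg y) (pdeg z)).

Definition signature (K : fieldType) (P : ptriple K) :
  (option nat * option nat * option nat)%type :=
  let: (x, y, z) := P in (pdeg x, pdeg y, pdeg z).

Definition markoff_triple (K : fieldType) (A : {poly K}) (P : ptriple K) : Prop :=
  let: (x, y, z) := P in
  [/\ is_solution A P, ole (Some 1%N) (height P),
      ole (pdeg x) (pdeg y) & ole (pdeg y) (pdeg z)].

Definition num_signatures (K : fieldType) (A : {poly K}) (H n : nat) : Prop :=
  exists s : seq (option nat * option nat * option nat),
    [/\ uniq s, size s = n &
        forall t, t \in s <->
          exists P : ptriple K, [/\ markoff_triple A P,
                                    ole (height P) (Some H) & signature P = t]].

(* Main.v *)
Require Import Defs.
From HB Require Import structures.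
From mathcomp Require Import all_boot all_order all_algebra.
From mathcomp Require Import zify ring lra.
Import Order.TTheory GRing.Theory Num.Theory.
Local Open Scope ring_scope.

Lemma size_mul_nz (K : fieldType) (p q : {poly K}) m n :
  size p = m.+1 -> size q = n.+1 -> size (p * q) = (m + n).+1.
Proof.
move=> hp hq; rewrite size_mul; first by rewrite hp hq; lia.
  by rewrite -size_poly_gt0 hp.
by rewrite -size_poly_gt0 hq.
Qed.

Arguments size_mul_nz {K p q m n}.
Lemma size_sub_big (K : fieldType) (p q : {poly K}) :
  (size q < size p)%N -> size (p - q) = size p.
Proof. by move=> h; rewrite size_polyDl // size_polyN. Qed.

Lemma construct (K : fieldType) (A : K) (hA : A != 0) (h2 : (2%:R:K) != 0)
  (i : K) (hi : i^+2 = -1) :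
  forall n a b, (a + b <= n)%N -> (a <= b)%N -> (0 < b)%N ->
  exists x y z : {poly K}, [/\ x^+2 + y^+2 + z^+2 = A%:P * x * y * z,
     size x = a.+1, size y = b.+1 & size z = (a+b).+1].
Proof.
have sA : size (A%:P) = 1%N by rewrite size_polyC hA.
elim=> [|n IH] a b hab hle hb; first by lia.
have [a0|apos] := eqVneq a 0%N.
  subst a.
  pose c : K := 2%:R / A.
  have c0 : c != 0 by rewrite mulf_neq0 // invr_eq0.
  have hc : A * c = 2%:R by rewrite /c mulrC mulfVK.
  clearbody c.
  exists c%:P, ('X^b + (c * i)%:P), 'X^b; split.
  - apply/eqP; rewrite -subr_eq0.
    have -> : A%:P * c%:P = 2%:R%:P by rewrite -polyCM hc.
    have -> : c%:P ^+ 2 + ('X^b + (c * i)%:P) ^+ 2 + 'X^b ^+ 2 -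
      2%:R%:P * ('X^b + (c * i)%:P) * 'X^b = (c%:P)^+2 * (1 + i%:P^+2).
      by rewrite [(c * i)%:P]polyCM polyC_natr; ring.
    have -> : i%:P ^+ 2 = -1 by rewrite -rmorphXn /= hi polyCN polyC1.
    by rewrite addrN mulr0.
  - by rewrite size_polyC c0.
  - by rewrite size_polyDl size_polyXn // (leq_ltn_trans (size_polyC_leq1 _)).
  - by rewrite size_polyXn.
have [h1|h1] := leqP a (b - a).
  have [x [y [z [E sx sy sz]]]] := IH a (b - a)%N ltac:(lia) h1 ltac:(lia).
  have sz' : size z = b.+1 by rewrite sz; congr (_.+1); lia.
  exists x, z, (A%:P * x * z - y); split.
  - apply/eqP; rewrite -subr_eq0.
    have -> : x ^+ 2 + z ^+ 2 + (A%:P * x * z - y) ^+ 2 - A%:P * x * z * (A%:P * x * z - y)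
      = x^+2 + y^+2 + z^+2 - A%:P * x * y * z by ring.
    by rewrite E subrr.
  - done.
  - done.
  - have sAxz : size (A%:P * x * z) = (a + b).+1.
      rewrite (size_mul_nz (size_mul_nz sA sx) sz'); lia.
    by rewrite size_sub_big sAxz // sy; lia.
have [x [y [z [E sx sy sz]]]] := IH (b - a)%N a ltac:(lia) ltac:(lia) ltac:(lia).
have sz' : size z = b.+1 by rewrite sz; congr (_.+1); lia.
exists y, z, (A%:P * y * z - x); split.
- apply/eqP; rewrite -subr_eq0.
  have -> : y ^+ 2 + z ^+ 2 + (A%:P * y * z - x) ^+ 2 - A%:P * y * z * (A%:P * y * z - x)
    = x^+2 + y^+2 + z^+2 - A%:P * x * y * z by ring.
  by rewrite E subrr.
- done.
- done.
- have sAyz : size (A%:P * y * z) = (a + b).+1.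
    rewrite (size_mul_nz (size_mul_nz sA sy) sz'); lia.
  by rewrite size_sub_big sAyz // sx; lia.
Qed.


Lemma pdegE (K : fieldType) (p : {poly K}) n : size p = n.+1 -> pdeg p = Some n.
Proof.
move=> h; rewrite /pdeg; have -> : (p == 0) = false.
  by apply/negbTE; rewrite -size_poly_gt0 h.
by rewrite h.
Qed.

Lemma sq_size (K : fieldType) (p : {poly K}) n : size p = n.+1 -> size (p^+2) = (n+n).+1.
Proof. by move=> h; rewrite expr2 (size_mul_nz h h). Qed.

Arguments sq_size {K p n}.
Arguments pdegE {K p n}.
Lemma size3 (K : fieldType) (p q r : {poly K}) :
  (size (p + q + r)%R <= maxn (size p) (maxn (size q) (size r)))%N.
Proof.
apply: leq_trans (size_polyD _ _) _; rewrite geq_max; apply/andP; split; last by lia.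
apply: leq_trans (size_polyD _ _) _; lia.
Qed.

Lemma classify (K : fieldType) (A : K) (hA : A != 0) (P : ptriple K) :
  markoff_triple A%:P P ->
  (exists c, [/\ signature P = (None, Some c, Some c), height P = Some c & (0 < c)%N])
  \/ (exists a b : nat, [/\ signature P = (Some a, Some b, Some (a+b)%N),
        height P = Some (a+b)%N, (a <= b)%N & (0 < a + b)%N]).
Proof.
have sA : size (A%:P) = 1%N by rewrite size_polyC hA.
case: P => [[x y] z]; rewrite /markoff_triple /is_solution /signature /height.
case=> E hh o1 o2.
have [x0|xn] := eqVneq x 0.
  subst x.
  have [y0|yn] := eqVneq y 0.
    subst y.
    move: E; rewrite !mulr0 mul0r !expr0n /= !add0r => /eqP; rewrite expf_eq0 /= => /eqP z0.
    by subst z; move: hh; rewrite /pdeg eqxx.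
  have [z0|zn] := eqVneq z 0.
    by subst z; move: o2; rewrite /pdeg eqxx (negbTE yn).
  have sy : size y = (size y).-1.+1 by rewrite prednK // size_poly_gt0.
  have sz : size z = (size z).-1.+1 by rewrite prednK // size_poly_gt0.
  move: E; rewrite !mulr0 !mul0r expr0n /= add0r => /eqP; rewrite addr_eq0 => /eqP E.
  have := congr1 (fun p : {poly K} => size p) E; rewrite /=; rewrite size_polyN (sq_size sy) (sq_size sz) => /eqP.
  rewrite eqSS => hyz.
  have hyz' : (size y).-1 = (size z).-1 by lia.
  left; exists (size y).-1.
  rewrite /pdeg eqxx (negbTE yn) (negbTE zn) hyz'.
  move: hh; rewrite /pdeg (negbTE yn) (negbTE zn) /= hyz' /omax /ole /= leqnn => h.
  by split => //; move: h; rewrite eqxx.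
move: o1 o2; rewrite {1 2}/pdeg (negbTE xn).
have [y0|yn] := eqVneq y 0; first by rewrite /pdeg y0 eqxx.
have [z0|zn] := eqVneq z 0; first by rewrite /pdeg z0 eqxx (negbTE yn).
have sx : size x = (size x).-1.+1 by rewrite prednK // size_poly_gt0.
have sy : size y = (size y).-1.+1 by rewrite prednK // size_poly_gt0.
have sz : size z = (size z).-1.+1 by rewrite prednK // size_poly_gt0.
rewrite (pdegE sy) (pdegE sz) /= => hab hbc.
move: hh; rewrite (pdegE sx) (pdegE sy) (pdegE sz).
set a := (size x).-1 in sx hab *; set b := (size y).-1 in sy hab hbc *;
set c := (size z).-1 in sz hbc *.
move=> hh.
have hab' : (a <= b)%N := hab.
have hbc' : (b <= c)%N := hbc.
clearbody a b c.
have sR : size (A%:P * x * y * z) = (a + b + c).+1.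
  by rewrite (size_mul_nz (size_mul_nz (size_mul_nz sA sx) sy) sz); lia.
have hc : c = (a + b)%N.
  have [lt|ge] := ltnP c (a + b).
    have := @size3 _ (x^+2) (y^+2) (z^+2).
    rewrite E sR (sq_size sx) (sq_size sy) (sq_size sz).
    lia.
  have [gt|eq] := ltnP (a + b) c; last by lia.
  have h12 : (size (x^+2 + y^+2)%R < size (z^+2)%R)%N.
    apply: leq_ltn_trans (size_polyD _ _) _.
    by rewrite (sq_size sx) (sq_size sy) (sq_size sz) gtn_max; apply/andP; split; lia.
  have := congr1 (fun p : {poly K} => size p) E; rewrite /=; rewrite addrC size_polyDl // sR (sq_size sz).
  lia.
right; exists a, b; subst c; split => //.
  by move: hh; rewrite /omax /ole /=; case: ifP; case: ifP => //; lia.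
by move: hh; rewrite /omax /ole /=; case: ifP; case: ifP => //; lia.
Qed.

Definition sigL (H : nat) : seq (option nat * option nat * option nat) :=
  [seq (None, Some c, Some c) | c <- iota 1 H] ++
  [seq (Some a, Some (s - a)%N, Some s) | s <- iota 1 H, a <- iota 0 (s./2).+1].

Lemma sigL_uniq H : uniq (sigL H).
Proof.
rewrite cat_uniq; apply/and3P; split.
- rewrite map_inj_uniq ?iota_uniq // => c1 c2 [].
  done.
- apply/hasPn => t /allpairsPdep [s [a [_ _ ->]]].
  by apply/mapP => -[c _].
- apply: allpairs_uniq_dep; first exact: iota_uniq.
    by move=> s _; exact: iota_uniq.
  move=> [s1 a1] [s2 a2] _ _ /= [e1 _ e2]; subst.
  done.
Qed.

Lemma mem_sigL H t : t \in sigL H <->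
  (exists c, [/\ t = (None, Some c, Some c), (0 < c)%N & (c <= H)%N]) \/
  (exists a b : nat, [/\ t = (Some a, Some b, Some (a + b)%N), (a <= b)%N,
      (0 < a + b)%N & (a + b <= H)%N]).
Proof.
rewrite mem_cat; split.
  case/orP.
    case/mapP => c; rewrite mem_iota => hc ->; left; exists c; split => //; lia.
  case/allpairsPdep => s [a [hs ha ->]]; right; exists a, (s - a)%N.
  move: hs ha; rewrite !mem_iota => hs ha.
  have ha' : (a.*2 <= s)%N by rewrite -geq_half_double; lia.
  have -> : (a + (s - a))%N = s by lia.
  split => //; lia.
case=> [[c [-> h1 h2]]|[a [b [-> h1 h2 h3]]]].
  by apply/orP; left; apply/mapP; exists c => //; rewrite mem_iota; lia.
apply/orP; right; apply/allpairsPdep; exists (a + b)%N, a; split.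
- rewrite mem_iota; lia.
- rewrite mem_iota add0n ltnS geq_half_double; lia.
- congr (_, _, _); congr Some; lia.
Qed.

Lemma size_sigL H : size (sigL H) = (H + sumn [seq (s./2).+1 | s <- iota 1 H])%N.
Proof.
rewrite size_cat size_map size_iota size_allpairs_dep; congr (_ + _)%N.
by congr sumn; apply: eq_map => s; rewrite size_iota.
Qed.

Lemma sum_bounds H :
  (H * H <= 4 * (H + sumn [seq (s./2).+1 | s <- iota 1 H]) <= H * H + 9 * H)%N.
Proof.
elim: H => [//|H IH].
move: IH => /andP [l u].
have -> : iota 1 H.+1 = iota 1 H ++ [:: H.+1] by rewrite -(addn1 H) iotaD add1n addn1.
rewrite map_cat sumn_cat /= addn0.
have := odd_double_half H.+1.
move: l u; set g := sumn _; set h := (H.+1./2).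
case: (odd H.+1) => /= l u e; apply/andP; split; lia.
Qed.

Lemma omaxS m n : omax (Some m) (Some n) = Some (maxn m n).
Proof. by rewrite /omax /ole; case: leqP => h; congr Some; lia. Qed.
Lemma oleS m n : ole (Some m) (Some n) = (m <= n)%N.
Proof. by []. Qed.
Lemma omaxN o : omax None o = o.
Proof. by []. Qed.

Theorem theorem1p4 (K : fieldType) (hchar : (2%:R : K) != 0)
    (hi : exists i : K, i ^+ 2 = -1) (A : K) (hA : A != 0) :
  exists N : nat -> nat,
    (forall H : nat, num_signatures A%:P H (N H)) /\
    (forall eps : rat, 0 < eps -> exists H0 : nat, forall H : nat, (H0 <= H)%N ->
       `| (N H)%:R / (H%:R ^+ 2) - 1 / 4%:R | < eps).
Proof.
have [i hi'] := hi.
exists (fun H => size (sigL H)); split.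
  move=> H; exists (sigL H); split; [exact: sigL_uniq | by [] | move=> t]; rewrite mem_sigL; split.
    case=> [[c [-> c1 cH]] | [a [b [-> hab hpos hH]]]].
      have i0 : i != 0.
        apply/eqP => i0; move: hi'; rewrite i0 expr0n /= => /eqP.
        by rewrite eq_sym oppr_eq0 oner_eq0.
      have si : size (i%:P) = 1%N by rewrite size_polyC i0.
      have sX : size ('X^c : {poly K}) = c.+1 by rewrite size_polyXn.
      have sz : size (i%:P * 'X^c) = c.+1 by rewrite (size_mul_nz si sX).
      have ip : i%:P ^+ 2 = -1 by rewrite -rmorphXn /= hi' polyCN polyC1.
      exists (0, 'X^c, i%:P * 'X^c).
      rewrite /markoff_triple /height /signature (pdegE sX) (pdegE sz) /pdeg eqxx.
      rewrite omaxS maxnn omaxN !oleS; split => //; split => //.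
      rewrite /is_solution mulr0 !mul0r exprMn ip; ring.
    have hb : (0 < b)%N by lia.
    have [x [y [z [E sx sy sz]]]] := construct K A hA hchar i hi' (a + b)%N a b (leqnn _) hab hb.
    exists (x, y, z).
    rewrite /markoff_triple /height /signature (pdegE sx) (pdegE sy) (pdegE sz).
    rewrite !omaxS !oleS; split => //; [split => //; lia | lia].
  case=> P [hm hh <-].
  case: (classify K A hA P hm) => [[c [e1 e2 e3]]|[a [b [e1 e2 e3 e4]]]].
    left; exists c; split => //; move: hh; rewrite e2 oleS //.
  right; exists a, b; split => //; move: hh; rewrite e2 oleS //.
move=> eps e0.
exists (Num.truncn (9 / eps)).+1 => H hH.
have := sum_bounds H; rewrite -size_sigL; set n := size (sigL H) => /andP [l u].
have hpos : (0 < H)%N by lia.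
have h0 : 0 < (H%:R : rat) by rewrite ltr0n.
have kl : 9 / eps < (H%:R : rat).
  by apply: lt_le_trans (truncnS_gt _) _; rewrite ler_nat.
have h9 : 9 < eps * H%:R by rewrite mulrC -ltr_pdivrMr.
have L : (H%:R * H%:R : rat) <= 4 * n%:R.
  by move: l; rewrite -(ler_nat rat) !natrM.
have U : (4 * n%:R : rat) <= H%:R * H%:R + 9 * H%:R.
  by move: u; rewrite -(ler_nat rat) natrD !natrM.
move: L U h9 h0 kl; set h := (H%:R : rat); set m := (n%:R : rat) => L U h9 h0 _.
have hn : h != 0 by rewrite gt_eqF.
have -> : m / h ^+ 2 - 1 / 4%:R = (4 * m - h * h) / (4 * (h * h)) by field.
have d0 : 0 < 4 * (h * h) by rewrite mulr_gt0 // mulr_gt0.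
rewrite ger0_norm; last by apply: divr_ge0; [lra | exact: ltW].
rewrite ltr_pdivrMr //.
have h9' : 0 < eps * h - 9 by rewrite subr_gt0.
have := mulr_gt0 h0 h9'.
nra.
Qed.
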